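(* There exist an argumentation semantics $\sigma$ whose extensions are maximal conflict-free sets (w.r.t. set inclusion) and argumentation frameworks $AF=(AR,Attacks)$, $AF'=(AR',Attacks')$ with $AF\preceq_N AF'$ such that the following statement does NOT hold: if for all $E\in\sigma(AF)$ there exists $E'\in\sigma(AF')$ with $E'\not\subseteq AR$ or $E'=E$, then for all $E\in\sigma(AF)$ there exists $E'\in\sigma(AF')$ with $E\subseteq E'$.
   Context: An argumentation framework is a pair $(AR,Attacks)$ with $AR$ a finite set and $Attacks\subseteq AR\times AR$; $a$ attacks $b$ iff $(a,b)\in Attacks$. A set $S$ is conflict-free iff no element of $S$ attacks an element of $S$. An argumentation semantics $\sigma$ assigns to each argumentation framework a set $\sigma(AF)$ of subsets of $AR$; ''$\sigma$'s extensions are maximal conflict-free sets'' means that for every $AF$, every $E\in\sigma(AF)$ is a $\subseteq$-maximal conflict-free subset of the argument set of $AF$. $AF\preceq_N AF'$ (normal expansion) iff $AR\subseteq AR'$, $Attacks\subseteq Attacks'$ and no $(a,b)\in Attacks'\setminus Attacks$ has both $a,b\in AR$. *)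

(* Defs.v *)
From mathcomp Require Import all_boot finmap.
Set Implicit Arguments. Unset Strict Implicit. Unset Printing Implicit Defensive.
Local Open Scope fset_scope.

Record AF := mkAF {
  AR : {fset nat};
  Attacks : {fset (nat * nat)};
  Attacks_wf : forall a b, (a, b) \in Attacks -> (a \in AR) && (b \in AR)
}.

Definition attacks (F : AF) (a b : nat) : Prop := (a, b) \in Attacks F.

Definition conflict_free (F : AF) (S : {fset nat}) : Prop :=
  forall a b, a \in S -> b \in S -> ~ attacks F a b.

Definition maximal_conflict_free (F : AF) (S : {fset nat}) : Prop :=
  S `<=` AR F /\ conflict_free F S /\
  forall T : {fset nat}, S `<=` T -> T `<=` AR F -> conflict_free F T -> T = S.

Definition semantics := AF -> {fset nat} -> Prop.

Definition extensions_max_cf (sigma : semantics) : Prop :=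
  forall (F : AF) (E : {fset nat}), sigma F E -> maximal_conflict_free F E.

Definition normal_expansion (F F' : AF) : Prop :=
  AR F `<=` AR F' /\ Attacks F `<=` Attacks F' /\
  forall a b, (a, b) \in Attacks F' -> (a, b) \notin Attacks F ->
    ~ (a \in AR F /\ b \in AR F).

(* Main.v *)
Require Import Defs.
From mathcomp Require Import all_boot finmap.
Local Open Scope fset_scope.

Lemma wf1 : forall a b, (a, b) \in (fset0 : {fset nat * nat}) -> (a \in [fset 1%N]) && (b \in [fset 1%N]).
Proof. by move=> a b; rewrite in_fset0. Qed.

Lemma wf2 : forall a b, (a, b) \in [fset (2,1)%N] -> (a \in [fset 1%N; 2%N]) && (b \in [fset 1%N; 2%N]).
Proof. by move=> a b; rewrite !inE => /eqP [-> ->]. Qed.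

Definition F1 := mkAF wf1.
Definition F2 := mkAF wf2.

Definition sig0 : semantics := fun F E =>
  maximal_conflict_free F E /\ (2%N \in AR F -> E = [fset 2%N]).

Lemma mcf1 : maximal_conflict_free F1 [fset 1%N].
Proof.
split; first exact: fsubset_refl.
split; first by move=> a b _ _; rewrite /attacks /= in_fset0.
move=> T H1 H2 _; apply/eqP; rewrite eqEfsubset H1 H2 //.
Qed.

Lemma mcf2 : maximal_conflict_free F2 [fset 2%N].
Proof.
split; first by apply/fsubsetP => x; rewrite !inE => ->; rewrite orbT.
split; first by move=> a b; rewrite !inE /attacks /= !inE => /eqP -> /eqP ->.
move=> T H1 H2 Hc; apply/eqP; rewrite eqEfsubset H1 andbT.
apply/fsubsetP => x xT.
have := fsubsetP H2 x xT; rewrite !inE => /orP [/eqP Ex|//].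
subst x. exfalso. apply: (Hc 2%N 1%N) => //.
  by apply: (fsubsetP H1); rewrite inE.
by rewrite /attacks /= inE.
Qed.

Theorem proposition27 :
  exists sigma : semantics,
    extensions_max_cf sigma /\
    exists F F' : AF,
      normal_expansion F F' /\
      ~ ((forall E, sigma F E ->
            exists E', sigma F' E' /\ (~ (E' `<=` AR F) \/ E' = E)) ->
         (forall E, sigma F E -> exists E', sigma F' E' /\ E `<=` E')).
Proof.
exists sig0; split; first by move=> F E [].
exists F1, F2; split.
  split; first by apply/fsubsetP => x; rewrite !inE => ->.
  split; first exact: fsub0set.
  by move=> a b; rewrite /= !inE => /eqP [-> ->] _ [].
move=> H.
have s1 : sig0 F1 [fset 1%N] by split; [exact: mcf1 | rewrite /= inE].
have s2 : sig0 F2 [fset 2%N] by split; [exact: mcf2 | ].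
have P : forall E, sig0 F1 E -> exists E', sig0 F2 E' /\ (~ (E' `<=` AR F1) \/ E' = E).
  move=> E _; exists [fset 2%N]; split => //; left.
  by move/fsubsetP => /(_ 2%N); rewrite !inE => /(_ erefl).
have [E' [[_ HE'] HS]] := H P [fset 1%N] s1.
rewrite HE' /= ?inE ?orbT // in HS.
by move/fsubsetP: HS => /(_ 1%N); rewrite !inE => /(_ erefl).
Qed.
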